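(* Let $1\le f\le\lfloor n/2\rfloor$ and $J_0=(n-2f+1,n-2f+2,\dots,n)$. (1) For every $d\in\mathcal D_f$ there exists $w\in\mathfrak S_n$ with $d_0=dw$ and $\ell(d_0)=\ell(d)+\ell(w)$. (2) For every $J\in\mathcal P_f$ there exists $w'\in\mathfrak S_n$ with $d_{J_0}=d_Jw'$ and $\ell(d_{J_0})=\ell(d_J)+\ell(w')$. (3) For every $d\in\mathcal D_{\nu_f}$ with $d\ne d_0d_{J_0}$ there exists $1\le j\le n-1$ such that $ds_j\in\mathcal D_{\nu_f}$ and $\ell(ds_j)=\ell(d)+1$.
   Context: $\mathfrak S_n$ acts on $\{1,\dots,n\}$ on the right: $(a)(\sigma\tau)=((a)\sigma)\tau$; $s_j=(j,j+1)$, $\ell$ is the Coxeter length. Let $\nu_f=((2^f),(n-2f))$ and $\mathfrak t^{\nu_f}$ the bitableau with $1,\dots,n$ entered in order along the rows of the first component (shape $(2^f)$) and then along the single row of the second component; $\mathfrak t^{\nu_f}d$ replaces each entry $a$ by $(a)d$. $\mathcal D_{\nu_f}$ is the set of $d\in\mathfrak S_n$ such that $\mathfrak t^{\nu_f}d$ is row standard and the first column of its first component increases from top to bottom; $\mathcal D_f=\mathcal D_{\nu_f}\cap\mathfrak S_{2f}$. $d_0\in\mathfrak S_{2f}$ is defined by $(a)d_0=(a+1)/2$ for odd $a\in\{1,\dots,2f-1\}$ and $(a)d_0=2f+1-a/2$ for even $a\in\{2,\dots,2f\}$. $\mathcal P_f=\{(i_1,\dots,i_{2f}):1\le i_1<\dots<i_{2f}\le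 n\}$, and for $J\in\mathcal P_f$, $d_J$ is the unique element of $\mathcal D_{\nu_f}$ such that the first component of $\mathfrak t^{\nu_f}d_J$ is the tableau obtained by inserting the entries of $J$ in increasing order along successive rows of the shape $(2^f)$. *)

(* Defs.v *)
(* Permutations of {1,...,n} are modelled by 'S_n acting on
   'I_n = {0,...,n-1}; the paper's entry a corresponds to the ordinal a-1.
   MathComp's product satisfies (s * t) x = t (s x), i.e. it is exactly the
   paper's right action: (a)(s t) = ((a)s)t. *)
From mathcomp Require Import all_boot all_order all_fingroup.
Set Implicit Arguments. Unset Strict Implicit. Unset Printing Implicit Defensive.

Definition act (n : nat) (d : 'S_n) (a : nat) : nat :=
  if a is a'.+1 then
    (if (insub a' : option 'I_n) is Some i then (d i).+1 else a)
  else a.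

Definition sadj (n j : nat) : 'S_n :=
  if ((insub j.-1 : option 'I_n), (insub j : option 'I_n)) is (Some a, Some b)
  then tperm a b else 1%g.

Definition has_word_len (n : nat) (s : 'S_n) (k : nat) : bool :=
  [exists t : k.-tuple 'I_n.-1, s == (\prod_(i <- t) sadj n i.+1)%g].

(* Coxeter length: minimal number of simple transpositions whose product is s.
   (Every permutation has a reduced word of length <= n(n-1)/2 <= n*n, so the
   cap n*n in the minimum is harmless.) *)
Definition len (n : nat) (s : 'S_n) : nat :=
  \big[minn/(n * n)]_(k < (n * n).+1 | has_word_len s k) k.

(* The bitableau t^{nu_f} d: entry in row r, column c (1-indexed) of the first
   component (shape (2^f)), and entry k (1-indexed) of the second component. *)
Definition tab1 (n f : nat) (d : 'S_n) (r c : nat) : nat := act d (2 * (r - 1) + c).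
Definition tab2 (n f : nat) (d : 'S_n) (k : nat) : nat := act d (2 * f + k).

Definition Dnu (n f : nat) (d : 'S_n) : bool :=
  [&& [forall r : 'I_f, tab1 f d r.+1 1 < tab1 f d r.+1 2],
      [forall k : 'I_(n - 2 * f).-1, tab2 f d k.+1 < tab2 f d k.+2] &
      [forall r : 'I_f.-1, tab1 f d r.+1 1 < tab1 f d r.+2 1]].

Definition inS2f (n f : nat) (d : 'S_n) : bool :=
  [forall i : 'I_n, (2 * f <= i) ==> (d i == i)].

Definition Df (n f : nat) (d : 'S_n) : bool := Dnu f d && inS2f f d.

Definition d0img (f a : nat) : nat :=
  if a <= 2 * f then (if odd a then (a + 1) %/ 2 else 2 * f + 1 - a %/ 2) else a.
Definition d0fun (n f : nat) (i : 'I_n) : 'I_n := insubd i (d0img f i.+1).-1.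
(* the permutation with graph d0fun (which is injective when 2f <= n) *)
Definition d0 (n f : nat) : 'S_n := insubd (1%g : 'S_n) [ffun i => d0fun f i].

Definition inP (n f : nat) (J : seq nat) : bool :=
  [&& size J == 2 * f, sorted ltn J & all (fun i => 0 < i <= n) J].

Definition tabJ (J : seq nat) (r c : nat) : nat := nth 0 J (2 * (r - 1) + c - 1).

(* d_J: the (unique) d in D_{nu_f} whose first component is tabJ J *)
Definition is_dJ (n f : nat) (J : seq nat) (d : 'S_n) : bool :=
  Dnu f d && [forall r : 'I_f, forall c : 'I_2, tab1 f d r.+1 c.+1 == tabJ J r.+1 c.+1].
Definition dJ (n f : nat) (J : seq nat) : 'S_n :=
  odflt 1%g [pick d | is_dJ f J d].

Definition J0 (n f : nat) : seq nat := iota (n - 2 * f + 1) (2 * f).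

(* Main.v *)
From Stdlib Require Import Classical.
From mathcomp Require Import zify.
From Pilot Require Import Defs.
From mathcomp Require Import all_boot all_order all_fingroup.
Set Implicit Arguments. Unset Strict Implicit. Unset Printing Implicit Defensive.
Open Scope nat_scope.
Local Notation act := Pilot.Defs.act.

Section Act.
Local Open Scope group_scope.
Variable n : nat.
Implicit Types d e s : 'S_n.

Lemma act_ord d (i : 'I_n) : act d i.+1 = (d i).+1.
Proof. by rewrite /act valK. Qed.

Lemma act_out d a : n < a -> act d a = a.
Proof. case: a => // a h; rewrite /act insubF //; apply/negbTE; rewrite -leqNgt; lia. Qed.

Lemma act0 d : act d 0 = 0. Proof. by []. Qed.

Lemma act_in d a : 1 <= a <= n -> 1 <= act d a <= n.
Proof.
case: a => // a /andP[_ h]; have h' : a < n by [].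
by rewrite -[a]/(nat_of_ord (Ordinal h')) act_ord /= ltn_ord.
Qed.

Lemma actM d e a : act (d * e)%g a = act e (act d a).
Proof.
case: a => // a; case: (ltnP a n) => h.
  by rewrite -[a]/(nat_of_ord (Ordinal h)) !act_ord permM.
by rewrite !act_out.
Qed.

Lemma act1 a : act (1%g : 'S_n) a = a.
Proof.
case: a => // a; case: (ltnP a n) => h.
  by rewrite -[a]/(nat_of_ord (Ordinal h)) !act_ord perm1.
by rewrite !act_out.
Qed.

Lemma actK d a : act d^-1 (act d a) = a.
Proof. by rewrite -actM mulgV act1. Qed.

Lemma actKV d a : act d (act d^-1 a) = a.
Proof. by rewrite -actM mulVg act1. Qed.

Lemma act_inj d a b : act d a = act d b -> a = b.
Proof. by move=> h; rewrite -(actK d a) h actK. Qed.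

Lemma act_perm_eq d e : (forall a, 1 <= a <= n -> act d a = act e a) -> d = e.
Proof.
move=> h; apply/permP => i; apply: val_inj.
have := h i.+1; rewrite !act_ord ltn_ord => /(_ isT); case; done.
Qed.

Definition sig (j v : nat) := if v == j then j.+1 else if v == j.+1 then j else v.

Lemma tperm_val (a b x : 'I_n) :
  (tperm a b x : nat) = if x == a then b else if x == b then a else x.
Proof.
case: (eqVneq x a) => [->|xa]; first by rewrite tpermL.
case: (eqVneq x b) => [->|xb]; first by rewrite tpermR.
by rewrite tpermD // eq_sym.
Qed.

Lemma sadj_tperm (a b : 'I_n) : b = a.+1 :> nat -> sadj n b = tperm a b.
Proof.
move=> hb; rewrite /sadj.
have -> : (b : nat).-1 = a by rewrite hb.
by rewrite !valK.
Qed.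

Lemma act_sadj j v : 1 <= j < n -> act (sadj n j) v = sig j v.
Proof.
move=> /andP[h1 h2].
have ha : j.-1 < n by lia.
pose a := Ordinal ha; pose b := Ordinal h2.
have -> : sadj n j = tperm a b by rewrite -(sadj_tperm (a:=a) (b:=b)) //= ; lia.
case: v => [|v]; first by rewrite /sig /=; case: j h1 {ha a b h2}.
case: (ltnP v n) => hv.
  rewrite -[v]/(nat_of_ord (Ordinal hv)) act_ord tperm_val /sig.
  rewrite -!(inj_eq val_inj) /=.
  case: (v =P j.-1) => ?; case: (v =P j) => ?; case: (v.+1 =P j) => ?; case: (v.+1 =P j.+1) => ? /=; lia.
rewrite act_out // /sig ifF; last by apply/eqP; lia.
by rewrite ifF //; apply/eqP; lia.
Qed.

Definition inv s := #|[set p : 'I_n * 'I_n | (p.1 < p.2) && (s p.2 < s p.1)]|.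

Lemma inv1 : inv 1 = 0.
Proof.
apply/eqP; rewrite cards_eq0; apply/eqP/setP => p; rewrite !inE !perm1.
by apply/negbTE/negP => /andP[h1 h2]; have := ltn_trans h1 h2; rewrite ltnn.
Qed.

Lemma inv_bound s : inv s <= n * n.
Proof. by apply: leq_trans (max_card _) _; rewrite card_prod card_ord. Qed.

Lemma tperm_lt (a b x y : 'I_n) : b = a.+1 :> nat ->
  ~~ ((x == a) && (y == b)) -> ~~ ((x == b) && (y == a)) ->
  (tperm a b y < tperm a b x) = (y < x).
Proof.
move=> hb h1 h2; rewrite !tperm_val.
move: h1 h2; rewrite -!(inj_eq val_inj) /=.
case: (eqVneq (x:nat) a) => e1; case: (eqVneq (x:nat) b) => e2;
case: (eqVneq (y:nat) a) => e3; case: (eqVneq (y:nat) b) => e4 //= _ _;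
apply/idP/idP => /ltP h; apply/ltP; lia.
Qed.

Lemma inv_up s (a b : 'I_n) : b = a.+1 :> nat -> s^-1 a < s^-1 b ->
  inv (s * tperm a b) = (inv s).+1.
Proof.
move=> hb hlt; pose P := (s^-1 a, s^-1 b).
have PX : P \notin [set p : 'I_n * 'I_n | (p.1 < p.2) && (s p.2 < s p.1)].
  by rewrite inE /= !permKV; apply/negP => /andP[_]; rewrite hb; lia.
move: PX; rewrite /inv; set X := [set p : 'I_n * 'I_n | (p.1 < p.2) && (s p.2 < s p.1)] => PX; have := cardsU1 P X; rewrite PX add1n => <-; clear PX; rewrite {}/X; apply: eq_card => -[x y].
rewrite !inE /= !permM.
case: (eqVneq (x, y) P) => [[-> ->]|ne] /=.
  by rewrite hlt !permKV tpermL tpermR hb ltnSn.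
case: (ltnP x y) => //= hxy.
apply: tperm_lt => //.
  apply/negP => /andP[/eqP e1 /eqP e2]; move: ne.
  by rewrite /P -e1 -e2 !permK eqxx.
apply/negP => /andP[/eqP e1 /eqP e2].
have : y < x by rewrite -(permK s x) -(permK s y) e1 e2.
by rewrite ltnNge ltnW.
Qed.

Lemma inv_down s (a b : 'I_n) : b = a.+1 :> nat -> s^-1 b < s^-1 a ->
  (inv (s * tperm a b)).+1 = inv s.
Proof.
move=> hb hlt; rewrite -(inv_up (s := s * tperm a b) hb).
  by rewrite -mulgA tperm2 mulg1.
by rewrite invMg tpermV !permM tpermL tpermR.
Qed.

Lemma inv_step s (a b : 'I_n) : b = a.+1 :> nat -> inv (s * tperm a b) <= (inv s).+1.
Proof.
move=> hb; case: (ltngtP (s^-1 a) (s^-1 b)) => h.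
- by rewrite inv_up.
- by rewrite -(inv_down hb h); lia.
- by move/val_inj/perm_inj: h => e; move: hb; rewrite e; lia.
Qed.

Lemma ord_sadj (i : 'I_n.-1) : exists a b : 'I_n, b = a.+1 :> nat /\ sadj n i.+1 = tperm a b.
Proof.
have ha : (i : nat) < n by have := ltn_ord i; lia.
have hb : i.+1 < n by have := ltn_ord i; lia.
exists (Ordinal ha), (Ordinal hb); split => //.
by rewrite -(sadj_tperm (a := Ordinal ha) (b := Ordinal hb)).
Qed.

Lemma inv_prod (r : seq 'I_n.-1) x :
  inv (x * \prod_(i <- r) sadj n i.+1) <= inv x + size r.
Proof.
elim: r x => [|i r IH] x; first by rewrite big_nil mulg1 addn0.
rewrite big_cons mulgA /=; apply: leq_trans (IH _) _.
have [a [b [hb ->]]] := ord_sadj i.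
by rewrite addnS -addSn leq_add2r; exact: inv_step.
Qed.

Lemma not1_descent s : s != 1 -> exists a b : 'I_n, b = a.+1 :> nat /\ s^-1 b < s^-1 a.
Proof.
move=> hs; apply: Classical_Prop.NNPP => hno; apply/negP: hs; rewrite negbK.
have [n0|npos] := posnP n.
  by apply/eqP/permP => i; have := ltn_ord i; rewrite {2}n0.
pose o0 := Ordinal npos.
pose inord k : 'I_n := insubd o0 k.
have inordK : forall k, k < n -> (inord k : nat) = k by move=> k hk; rewrite /inord insubdK.
have inord_val : forall i : 'I_n, inord i = i by move=> i; apply: val_inj => /=; rewrite inordK.
pose g := (s^-1)%g.
have H : forall a b : 'I_n, b = a.+1 :> nat -> g a < g b.
  move=> a b hb; case: (ltngtP (g a) (g b)) => // h.
    by case: hno; exists a, b.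
  by move/val_inj/perm_inj: h => e; move: hb; rewrite e; lia.
have H2 : forall k (hk : k.+1 < n), g (inord k) < g (inord k.+1).
  move=> k hk; apply: H; rewrite !inordK //; lia.
have L1 : forall k, k < n -> k <= g (inord k).
  elim => [|k IH] hk //; have := H2 k hk; have := IH (ltnW hk); lia.
have L2 : forall k, k < n -> g (inord (n.-1 - k)) + k <= n.-1.
  elim => [|k IH] hk; first by have := ltn_ord (g (inord (n.-1 - 0))); lia.
  have := IH (ltnW hk); have := H2 (n.-1 - k.+1); rewrite (_ : (n.-1 - k.+1).+1 = n.-1 - k); last by lia.
  move=> /(_ ltac:(lia)); lia.
have gid : forall i, g i = i.
  move=> i; apply: val_inj => /=.
  have := L1 i (ltn_ord i); have := L2 (n.-1 - i) ltac:(have := ltn_ord i; lia).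
  rewrite (_ : n.-1 - (n.-1 - i) = i); last by have := ltn_ord i; lia.
  rewrite inord_val; have := ltn_ord i; lia.
apply/eqP; rewrite -[s]invgK -/g; apply/eqP.
have -> : g = 1 by apply/permP => i; rewrite gid perm1.
by rewrite invg1.
Qed.

Lemma word_exists k s : inv s = k ->
  exists r : seq 'I_n.-1, size r = k /\ s = \prod_(i <- r) sadj n i.+1.
Proof.
elim: k s => [|k IH] s hk.
  exists [::]; split => //; rewrite big_nil.
  apply/eqP; apply: Classical_Prop.NNPP => hs; have [a [b [hb hd]]] := not1_descent (introT negP hs).
  by have := inv_down hb hd; rewrite hk.
have hs : s != 1 by apply/eqP => e; move: hk; rewrite e inv1.
have [a [b [hb hd]]] := not1_descent hs.
have hk' : inv (s * tperm a b) = k by have := inv_down hb hd; rewrite hk; case.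
have [r [hr e]] := IH (s * tperm a b) hk'.
have ha : (a : nat) < n.-1 by have := ltn_ord b; lia.
exists (rcons r (Ordinal ha)); split; first by rewrite size_rcons hr.
rewrite -cats1 big_cat /= -e big_cons big_nil mulg1 -mulgA.
rewrite (_ : sadj n (Ordinal ha).+1 = tperm a b); first by rewrite tperm2 mulg1.
by rewrite -(sadj_tperm hb) /= hb.
Qed.

Lemma bigmin_seq_le (I : eqType) (r : seq I) (P : pred I) (F : I -> nat) x j :
  j \in r -> P j -> \big[minn/x]_(i <- r | P i) F i <= F j.
Proof.
elim: r => // i r IH; rewrite inE big_cons => /orP[/eqP <- ->|hj hP].
  exact: geq_minl.
case: (P i); last exact: IH.
exact: leq_trans (geq_minr _ _) (IH hj hP).
Qed.

Lemma len_le s k : has_word_len s k -> k <= n * n -> len s <= k.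
Proof.
move=> hw hk; rewrite /len.
exact: (@bigmin_seq_le _ _ _ (fun i : 'I_(n * n).+1 => nat_of_ord i) _ (Ordinal (hk : k < (n * n).+1)) (mem_index_enum _) hw).
Qed.

Lemma inv_le_len s : inv s <= len s.
Proof.
rewrite /len; apply: (big_ind (fun k => inv s <= k)).
- exact: inv_bound.
- by move=> x y hx hy; rewrite leq_min hx hy.
move=> k /existsP[t /eqP ->].
by have := inv_prod t 1; rewrite mul1g inv1 size_tuple.
Qed.

Lemma lenE s : len s = inv s.
Proof.
apply/eqP; rewrite eqn_leq inv_le_len andbT.
have [r [hr e]] := word_exists (erefl (inv s)).
apply: len_le (inv_bound s); apply/existsP.
rewrite -hr; exists (in_tuple r); by rewrite e.
Qed.

Lemma len1 : len (1 : 'S_n) = 0. Proof. by rewrite lenE inv1. Qed.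

Lemma len_mul (x y : 'S_n) : len (x * y) <= len x + len y.
Proof.
have [r [hr e]] := word_exists (erefl (inv y)).
by rewrite !lenE {1}e; apply: leq_trans (inv_prod _ _) _; rewrite hr.
Qed.

End Act.


Lemma ivt (P : nat -> bool) a b : a <= b -> P a -> ~~ P b ->
  exists i, [/\ a <= i, i < b, P i & ~~ P i.+1].
Proof.
move=> hab; elim: b hab => [|b IH] hab Pa Pb.
  have e : a = 0 by lia.
  by move: Pa Pb; rewrite e => ->.
case: (leqP a b) => h.
  case hPb: (P b).
    by exists b; split.
  have [i [h1 h2 h3 h4]] := IH h (Pa) (negbT hPb); exists i; split => //; lia.
have e : a = b.+1 by lia.
by move: Pa Pb; rewrite e => ->.
Qed.

Lemma Qlemma (m : nat) (v : nat -> nat) :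
  (forall k, 1 <= k -> k < m -> v k < v k.+1) ->
  (forall k, 1 <= k <= m -> 1 <= v k) ->
  (forall k, 1 <= k <= m -> 1 < v k -> exists k', 1 <= k' <= m /\ v k' = (v k).-1) ->
  forall k, 1 <= k <= m -> v k = k.
Proof.
move=> inc pos down.
have mono0 : forall d k, 1 <= k -> k + d.+1 <= m -> v k < v (k + d.+1).
  elim => [|d IH] k h1 h2; first by rewrite addn1; apply: inc; lia.
  apply: ltn_trans (IH k h1 ltac:(lia)) _; rewrite (_ : k + d.+2 = (k + d.+1).+1); last by lia.
  apply: inc; lia.
have mono : forall k k', 1 <= k -> k < k' -> k' <= m -> v k < v k'.
  move=> k k' h1 h2 h3; have -> : k' = k + (k' - k - 1).+1 by lia.
  apply: mono0; lia.
elim => [|k IH] hk; first by lia.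
case: (posnP k) => [k0|kpos].
  rewrite k0; apply: NNPP => ne.
  have h1 := pos 1 ltac:(lia).
  have [k' [hk' e]] := down 1 ltac:(lia) ltac:(rewrite k0 in hk; lia).
  case: (ltngtP k' 1) => c; first by lia.
    by have := mono 1 k' isT c ltac:(lia); lia.
  by move: e; rewrite c; lia.
have IHk := IH ltac:(lia).
have hi := inc k kpos ltac:(lia).
apply: NNPP => ne.
have [k' [hk' e]] := down k.+1 hk ltac:(lia).
case: (ltngtP k' k.+1) => c.
- case: (ltngtP k' k) => c2.
  + by have := mono k' k ltac:(lia) c2 ltac:(lia); lia.
  + lia.
  + by move: e; rewrite c2; lia.
- by have := mono k.+1 k' ltac:(lia) c ltac:(lia); lia.
- by move: e; rewrite c; lia.
Qed.

Section FC.
Variables (m f : nat) (u g : nat -> nat).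
Hypothesis H1 : forall a, 1 <= a <= 2 * f -> m < u a <= m + 2 * f.
Hypothesis H2 : forall v, m < v <= m + 2 * f -> 1 <= g v <= 2 * f /\ u (g v) = v.
Hypothesis Hinj : forall a b, 1 <= a <= 2 * f -> 1 <= b <= 2 * f -> u a = u b -> a = b.
Hypothesis Hrow : forall r, r < f -> u (2 * r + 1) < u (2 * r + 2).
Hypothesis Hcol : forall r, r.+1 < f -> u (2 * r + 1) < u (2 * r + 3).
Hypothesis Hns : forall j, m < j -> j < m + 2 * f -> g j < g j.+1 ->
  odd (g j) /\ (g j.+1 = (g j).+1 \/ (g j.+1 = (g j).+2 /\ (g j).+2 < 2 * f)).

Lemma gu a : 1 <= a <= 2 * f -> g (u a) = a.
Proof.
move=> ha; have [h1 h2] := H2 (H1 ha).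
by apply: Hinj => //.
Qed.

Lemma colmono r r' : r < r' -> r' < f -> u (2 * r + 1) < u (2 * r' + 1).
Proof.
move=> h1 h2; have -> : r' = r + (r' - r - 1).+1 by lia.
have : r + (r' - r - 1).+1 < f by lia.
elim: (r' - r - 1) => [|d IH] hd.
  by rewrite (_ : 2 * (r + 1) + 1 = 2 * r + 3); [apply: Hcol; lia | lia].
apply: ltn_trans (IH ltac:(lia)) _.
rewrite (_ : 2 * (r + d.+2) + 1 = 2 * (r + d.+1) + 3); last by lia.
apply: Hcol; lia.
Qed.

Lemma colmono_le r r' : r <= r' -> r' < f -> u (2 * r + 1) <= u (2 * r' + 1).
Proof.
move=> h1 h2; case: (ltngtP r r') => c; last by rewrite c.
  exact: ltnW (colmono c h2).
lia.
Qed.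

Lemma claimA r s : r < f -> s < f -> u (2 * s + 1) < u (2 * r + 2).
Proof.
move=> hr hs; apply: NNPP => hn.
have hne : u (2 * r + 2) != u (2 * s + 1).
  by apply/eqP => e; have := Hinj (a := 2 * r + 2) (b := 2 * s + 1) ltac:(lia) ltac:(lia) e; lia.
have hlt : u (2 * r + 2) < u (2 * s + 1) by lia.
have [i [i1 i2 i3 i4]] := ivt (P := fun v => ~~ odd (g v)) (ltnW hlt)
  ltac:(rewrite /= gu; lia) ltac:(rewrite /= gu; lia).
have hu1 := H1 (a := 2 * r + 2) ltac:(lia).
have hu2 := H1 (a := 2 * s + 1) ltac:(lia).
have [gi ugi] := H2 (v := i) ltac:(lia).
have [gi1 ugi1] := H2 (v := i.+1) ltac:(lia).
move: i3 i4 => /= i3 i4.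
have c : g i.+1 < g i.
  case: (ltngtP (g i.+1) (g i)) => // c.
    by have [o _] := Hns (j := i) ltac:(lia) ltac:(lia) c; move: i3; rewrite o.
  by move: i3 i4; rewrite c => ->.
pose r' := (g i)./2 - 1; pose s' := (g i.+1)./2.
have er : g i = 2 * r' + 2 by rewrite /r'; lia.
have es : g i.+1 = 2 * s' + 1 by rewrite /s'; lia.
have := colmono_le (r := s') (r' := r') ltac:(lia) ltac:(lia).
have := Hrow (r := r') ltac:(lia).
rewrite -er -es ugi ugi1; lia.
Qed.

Lemma odd_vals r : r < f -> u (2 * r + 1) = m + r + 1.
Proof.
elim: r => [|r IH] hr.
  have [gp up] := H2 (v := m + 0 + 1) ltac:(lia).
  have hu := H1 (a := 2 * 0 + 1) ltac:(lia).
  case/boolP: (odd (g (m + 0 + 1))) => o.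
    pose s := (g (m + 0 + 1))./2.
    have es : g (m + 0 + 1) = 2 * s + 1 by rewrite /s; lia.
    have := colmono_le (r := 0) (r' := s) ltac:(lia) ltac:(lia).
    rewrite -es up; lia.
  pose s := (g (m + 0 + 1))./2 - 1.
  have es : g (m + 0 + 1) = 2 * s + 2 by rewrite /s; lia.
  have := claimA (r := s) (s := 0) ltac:(lia) ltac:(lia).
  rewrite -es up; lia.
have IHr := IH ltac:(lia).
have low := Hcol (r := r) hr.
rewrite (_ : 2 * r.+1 + 1 = 2 * r + 3) ?IHr in low *; last by lia.
have [gp up] := H2 (v := m + r.+1 + 1) ltac:(lia).
case/boolP: (odd (g (m + r.+1 + 1))) => o.
  pose s := (g (m + r.+1 + 1))./2.
  have es : g (m + r.+1 + 1) = 2 * s + 1 by rewrite /s; lia.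
  case: (leqP s r) => c.
    have := colmono_le (r := s) (r' := r) c ltac:(lia).
    by rewrite -es up IHr; lia.
  have := colmono_le (r := r.+1) (r' := s) c ltac:(lia).
  rewrite -es up (_ : 2 * r.+1 + 1 = 2 * r + 3); lia.
pose s := (g (m + r.+1 + 1))./2 - 1.
have es : g (m + r.+1 + 1) = 2 * s + 2 by rewrite /s; lia.
have := claimA (r := s) (s := r.+1) ltac:(lia) ltac:(lia).
rewrite -es up (_ : 2 * r.+1 + 1 = 2 * r + 3); lia.
Qed.

Lemma even_pos v : m + f < v <= m + 2 * f -> ~~ odd (g v).
Proof.
move=> hv; have [gp up] := H2 (v := v) ltac:(lia); apply/negP => o.
pose s := (g v)./2.
have es : g v = 2 * s + 1 by rewrite /s; lia.
have := odd_vals (r := s) ltac:(lia).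
by rewrite -es up; lia.
Qed.

Lemma even_dec v : m + f < v -> v < m + 2 * f -> g v.+1 + 2 <= g v.
Proof.
move=> h1 h2.
have e1 := even_pos (v := v) ltac:(lia).
have e2 := even_pos (v := v.+1) ltac:(lia).
have [g1 u1] := H2 (v := v) ltac:(lia).
have [g2 u2] := H2 (v := v.+1) ltac:(lia).
case: (ltngtP (g v.+1) (g v)) => c.
- lia.
- by have [o _] := Hns (j := v) ltac:(lia) h2 c; move: e1; rewrite o.
- by move: u1 u2; rewrite c => ->; lia.
Qed.

Lemma even_vals r : r < f -> u (2 * r + 2) = m + 2 * f - r.
Proof.
move=> hr.
have up : forall i, 1 <= i <= f -> g (m + f + i) <= 2 * f + 2 - 2 * i.
  elim => [|i IH] hi; first lia.
  case: (posnP i) => [->|ip].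
    have [g1 _] := H2 (v := m + f + 1) ltac:(lia); lia.
  have := IH ltac:(lia); have := even_dec (v := m + f + i) ltac:(lia) ltac:(lia).
  rewrite -addnS; lia.
have lo : forall k, k < f -> 2 * k + 2 <= g (m + 2 * f - k).
  elim => [|k IH] hk.
    have [g1 _] := H2 (v := m + 2 * f - 0) ltac:(lia).
    have := even_pos (v := m + 2 * f - 0) ltac:(lia); lia.
  have := IH ltac:(lia); have := even_dec (v := m + 2 * f - k.+1) ltac:(lia) ltac:(lia).
  rewrite (_ : (m + 2 * f - k.+1).+1 = m + 2 * f - k); lia.
have := up (f - r) ltac:(lia); have := lo r hr.
rewrite (_ : m + f + (f - r) = m + 2 * f - r); last by lia.
move=> a b.
have e : g (m + 2 * f - r) = 2 * r + 2 by lia.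
have [_ u1] := H2 (v := m + 2 * f - r) ltac:(lia).
by rewrite -e u1.
Qed.

End FC.

Lemma FC_all (m f : nat) (u g : nat -> nat) :
  (forall a, 1 <= a <= 2 * f -> m < u a <= m + 2 * f) ->
  (forall v, m < v <= m + 2 * f -> 1 <= g v <= 2 * f /\ u (g v) = v) ->
  (forall a b, 1 <= a <= 2 * f -> 1 <= b <= 2 * f -> u a = u b -> a = b) ->
  (forall r, r < f -> u (2 * r + 1) < u (2 * r + 2)) ->
  (forall r, r.+1 < f -> u (2 * r + 1) < u (2 * r + 3)) ->
  (forall j, m < j -> j < m + 2 * f -> g j < g j.+1 ->
    odd (g j) /\ (g j.+1 = (g j).+1 \/ (g j.+1 = (g j).+2 /\ (g j).+2 < 2 * f))) ->
  forall r, r < f -> u (2 * r + 1) = m + r + 1 /\ u (2 * r + 2) = m + 2 * f - r.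
Proof.
move=> H1 H2 Hi Hr Hc Hn r hr; split.
  exact: (odd_vals H1 H2 Hi Hr Hc Hn hr).
exact: (even_vals H1 H2 Hi Hr Hc Hn hr).
Qed.


Lemma DnuE n f (d : 'S_n) : Dnu f d <->
  [/\ forall r, r < f -> act d (2 * r + 1) < act d (2 * r + 2),
      forall k, k.+1 < n - 2 * f -> act d (2 * f + k + 1) < act d (2 * f + k + 2) &
      forall r, r.+1 < f -> act d (2 * r + 1) < act d (2 * r + 3)].
Proof.
have e1 : forall r, 2 * (r.+1 - 1) + 1 = 2 * r + 1 by move=> r; lia.
have e2 : forall r, 2 * (r.+1 - 1) + 2 = 2 * r + 2 by move=> r; lia.
have e3 : forall r, 2 * (r.+2 - 1) + 1 = 2 * r + 3 by move=> r; lia.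
have e4 : forall k, 2 * f + k.+1 = 2 * f + k + 1 by move=> k; lia.
have e5 : forall k, 2 * f + k.+2 = 2 * f + k + 2 by move=> k; lia.
rewrite /Dnu /tab1 /tab2; split.
  case/and3P => /forallP h1 /forallP h2 /forallP h3; split.
  - by move=> r hr; have := h1 (Ordinal hr); rewrite /= e1 e2.
  - move=> k hk; have hk' : k < (n - 2 * f).-1 by lia.
    by have := h2 (Ordinal hk'); rewrite /= e4 e5.
  - move=> r hr; have hr' : r < f.-1 by lia.
    by have := h3 (Ordinal hr'); rewrite e1 e3.
case=> h1 h2 h3; apply/and3P; split; apply/forallP => r.
- by move: (h1 r (ltn_ord r)); rewrite -e1 -e2.
- have hr : r.+1 < n - 2 * f by have := ltn_ord r; lia.
  by move: (h2 r hr); rewrite -e4 -e5.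
- have hr : r.+1 < f by have := ltn_ord r; lia.
  by move: (h3 r hr); rewrite -e1 -e3.
Qed.

Definition cmp n f p q :=
  [\/ exists2 r, r < f & (p = 2 * r + 1 /\ q = 2 * r + 2),
      exists2 k, k.+1 < n - 2 * f & (p = 2 * f + k + 1 /\ q = 2 * f + k + 2) |
      exists2 r, r.+1 < f & (p = 2 * r + 1 /\ q = 2 * r + 3)].

Lemma DnuC n f (d : 'S_n) : Dnu f d <-> (forall p q, cmp n f p q -> act d p < act d q).
Proof.
rewrite DnuE; split.
  by case=> h1 h2 h3 p q [[r hr [-> ->]]|[k hk [-> ->]]|[r hr [-> ->]]]; auto.
move=> h; split => [r hr|k hk|r hr]; apply: h.
- by apply: Or31; exists r.
- by apply: Or32; exists k.
- by apply: Or33; exists r.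
Qed.

Lemma Dnu_swap n f (d : 'S_n) j : 1 <= j < n -> Dnu f d ->
  (forall p q, cmp n f p q -> act d p = j -> act d q = j.+1 -> False) ->
  Dnu f (d * sadj n j)%g.
Proof.
move=> hj /DnuC h hn; apply/DnuC => p q c; rewrite !actM !act_sadj //.
have := h p q c; have := hn p q c; rewrite /sig.
case: (act d p =P j) => ?; case: (act d p =P j.+1) => ?;
case: (act d q =P j) => ?; case: (act d q =P j.+1) => ?; lia.
Qed.

Lemma len_up n (d : 'S_n) j p q : 1 <= j < n -> 1 <= p -> q <= n -> p < q ->
  act d p = j -> act d q = j.+1 -> len (d * sadj n j)%g = len d + 1.
Proof.
move=> hj hp hq hpq ep eq.
have ha : j.-1 < n by lia.
have hb : j < n by lia.
pose a := Ordinal ha; pose b := Ordinal hb.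
have hab : (b : nat) = (a : nat).+1 by rewrite /=; lia.
have -> : sadj n j = tperm a b by rewrite -(sadj_tperm hab).
rewrite !lenE inv_up ?addn1 //.
have e1 : act (d^-1)%g j = ((d^-1)%g a).+1.
  by rewrite -act_ord; congr (act _ _); rewrite /=; lia.
have e2 : act (d^-1)%g j.+1 = ((d^-1)%g b).+1 by rewrite -act_ord.
have : act (d^-1)%g j = p by rewrite -ep actK.
have : act (d^-1)%g j.+1 = q by rewrite -eq actK.
rewrite e1 e2; lia.
Qed.

Definition reach n (x y : 'S_n) :=
  exists w : 'S_n, y = (x * w)%g /\ len y = len x + len w.

Lemma reach_refl n (x : 'S_n) : reach x x.
Proof. by exists 1%g; rewrite mulg1 len1 addn0. Qed.

Lemma reach_step n (x y : 'S_n) j : 1 <= j < n ->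
  len (x * sadj n j)%g = len x + 1 -> reach (x * sadj n j)%g y -> reach x y.
Proof.
move=> hj hl [w [-> hw]].
exists (sadj n j * w)%g; split; first by rewrite mulgA.
have hb : j < n by lia.
have ha : j.-1 < n by lia.
have hab : (Ordinal hb : nat) = (Ordinal ha : nat).+1 by rewrite /=; lia.
have ht : len (sadj n j) <= 1.
  rewrite (sadj_tperm hab) lenE; have := inv_step 1%g hab.
  by rewrite mul1g inv1.
have := len_mul (sadj n j) w; have := len_mul x (sadj n j * w)%g.
rewrite !mulgA => h1 h2; apply/eqP; rewrite eqn_leq h1 /= hw hl.
apply: leq_trans (leq_add (leqnn _) h2) _.
by rewrite addnA leq_add2r leq_add2l.
Qed.

Lemma inS2fE n f (d : 'S_n) : inS2f f d <-> (forall a, 2 * f < a <= n -> act d a = a).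
Proof.
split.
  move=> /forallP h [|a] ha; first by lia.
  have han : a < n by lia.
  rewrite -[a]/(nat_of_ord (Ordinal han)) act_ord.
  have h2 : 2 * f <= Ordinal han by rewrite /=; lia.
  by have := h (Ordinal han); rewrite h2 /= => /eqP ->.
move=> h; apply/forallP => i; apply/implyP => hi; apply/eqP/val_inj => /=.
have := h i.+1 ltac:(have := ltn_ord i; lia); rewrite act_ord; case; done.
Qed.


Lemma d0img_rng f n a : 2 * f <= n -> 1 <= a <= n -> 1 <= d0img f a <= n.
Proof.
move=> h1 h2; rewrite /d0img; case: (leqP a (2 * f)) => h4 /=;
case: (boolP (odd a)) => h6; lia.
Qed.

Lemma d0img_inj f n a b : 2 * f <= n -> 1 <= a <= n -> 1 <= b <= n ->
  d0img f a = d0img f b -> a = b.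
Proof.
move=> h1 h2 h3; rewrite /d0img; case: (leqP a (2 * f)) => h4; case: (leqP b (2 * f)) => h5 /=;
case: (boolP (odd a)) => h6; case: (boolP (odd b)) => h7; lia.
Qed.

Lemma d0_act n f a : 2 * f <= n -> 1 <= a <= n -> act (d0 n f) a = d0img f a.
Proof.
move=> hn ha.
have dv : forall i : 'I_n, (d0fun f i : nat) = (d0img f i.+1).-1.
  move=> i; rewrite /d0fun insubdK //; have := d0img_rng (a := i.+1) hn; have := ltn_ord i.
  rewrite /= => h1 h2; have := h2 ltac:(lia); lia.
have injf : injective (fun i : 'I_n => d0fun f i).
  move=> i j /= eq0; have := congr1 val eq0; rewrite /= !dv => e.
  apply: val_inj => /=.
  have := d0img_rng (a := i.+1) hn; have := d0img_rng (a := j.+1) hn.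
  have := ltn_ord i; have := ltn_ord j => hj hi h1 h2.
  have := h1 ltac:(lia); have := h2 ltac:(lia) => r1 r2.
  have := d0img_inj (a := i.+1) (b := j.+1) hn ltac:(lia) ltac:(lia) ltac:(lia); lia.
have inj : injectiveb [ffun i => d0fun f i] := perm_proof injf.
have e : forall i, d0 n f i = d0fun f i.
  move=> i; have ev : val (d0 n f) = [ffun i => d0fun f i] by rewrite /d0 insubdK.
  by rewrite [@fun_of_perm]unlock ev ffunE.
case: a ha => [|a] ha; first lia.
have han : a < n by lia.
rewrite -[a]/(nat_of_ord (Ordinal han)) act_ord e dv /=.
have := d0img_rng (a := a.+1) hn ha; lia.
Qed.

Definition rotv n m (i : nat) := if i + m < n then i + m else i + m - n.

Lemma rot_proof n m (i : 'I_n) : m <= n -> rotv n m i < n.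
Proof. move=> h; have := ltn_ord i; rewrite /rotv; case: ifP; lia. Qed.

Definition rotf n m (i : 'I_n) : 'I_n := insubd i (rotv n m i).

Lemma rotf_val n m (i : 'I_n) : m <= n -> (rotf m i : nat) = rotv n m i.
Proof. by move=> h; rewrite /rotf insubdK //; apply: rot_proof. Qed.

Lemma rotf_inj n m : m <= n -> injective (@rotf n m).
Proof.
move=> h i j e; have := congr1 (@nat_of_ord n) e; rewrite !rotf_val // /rotv.
have := ltn_ord i; have := ltn_ord j => hi hj.
move=> e'; apply: val_inj => /=; move: e'.
case: ifP => h1; case: ifP => h2; lia.
Qed.

Definition T0 n f : 'S_n :=
  if (n - 2 * f <= n) =P true is ReflectT h then perm (rotf_inj h) else 1%g.

Lemma T0_act n f a : 1 <= a <= n ->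
  act (T0 n f) a = if a <= 2 * f then a + (n - 2 * f) else a - 2 * f.
Proof.
move=> ha; rewrite /T0; case: eqP => h; last by exfalso; apply: h; lia.
case: a ha => [|a] ha; first lia.
have han : a < n by lia.
rewrite -[a]/(nat_of_ord (Ordinal han)) act_ord permE rotf_val //= /rotv.
case: ifP => h1; case: ifP => h2; lia.
Qed.

Lemma is_dJE n f J (d : 'S_n) : is_dJ f J d <->
  Dnu f d /\ (forall a, a < 2 * f -> act d a.+1 = nth 0 J a).
Proof.
rewrite /is_dJ; split.
  case/andP => hD /forallP h; split => // a ha.
  have hr : a./2 < f by lia.
  have hc : odd a < 2 by case: (odd a).
  have := h (Ordinal hr) => /forallP /(_ (Ordinal hc)) /eqP.
  rewrite /tab1 /tabJ.
  rewrite (_ : 2 * (a./2.+1 - 1) + (odd a).+1 = a.+1); last by lia.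
  by rewrite subn1.
case=> hD h; rewrite hD /=; apply/forallP => r; apply/forallP => c; apply/eqP.
rewrite /tab1 /tabJ.
have hr := ltn_ord r; have hc := ltn_ord c.
rewrite (_ : 2 * (r.+1 - 1) + c.+1 = (2 * r + c).+1); last by lia.
rewrite subn1 /=.
apply: h; lia.
Qed.

Lemma J0_nth n f a : a < 2 * f -> nth 0 (J0 n f) a = n - 2 * f + 1 + a.
Proof. by move=> h; rewrite /J0 nth_iota. Qed.

Lemma T0_is_dJ n f : 2 * f <= n -> is_dJ f (J0 n f) (T0 n f).
Proof.
move=> hn; apply/is_dJE; split.
  apply/DnuE; split.
  - move=> r hr; rewrite !T0_act; try lia; case: ifP; case: ifP; lia.
  - move=> k hk; rewrite !T0_act; try lia; case: ifP; case: ifP; lia.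
  - move=> r hr; rewrite !T0_act; try lia; case: ifP; case: ifP; lia.
move=> a ha; rewrite J0_nth // T0_act; last lia.
case: ifP; lia.
Qed.

Lemma is_dJ_J0 n f (d : 'S_n) : 2 * f <= n -> is_dJ f (J0 n f) d -> d = T0 n f.
Proof.
move=> hn /is_dJE [/DnuE [_ h2 _] hJ].
pose m := n - 2 * f.
have fc : forall a, 1 <= a <= 2 * f -> act d a = a + m.
  case=> [|a] ha; first lia.
  rewrite hJ; last lia.
  by rewrite J0_nth; [rewrite /m; lia | lia].
have Q := @Qlemma m (fun k => act d (2 * f + k)).
have Q' : forall k, 1 <= k <= m -> act d (2 * f + k) = k.
  apply: Q.
  - move=> k h1 h3; have := h2 k.-1 ltac:(rewrite /m in h3; lia).
    rewrite (_ : 2 * f + k.-1 + 1 = 2 * f + k); last lia.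
    by rewrite (_ : 2 * f + k.-1 + 2 = 2 * f + k.+1); last lia.
  - move=> k hk; have := act_in d (a := 2 * f + k) ltac:(rewrite /m in hk; lia); lia.
  - move=> k hk hw.
    set w := act d (2 * f + k) in hw *.
    have hwn : w <= n by have := act_in d (a := 2 * f + k) ltac:(rewrite /m in hk; lia); lia.
    set p := act (d^-1)%g w.-1.
    have hp : 1 <= p <= n by apply: act_in; lia.
    have ep : act d p = w.-1 by rewrite actKV.
    case: (leqP p (2 * f)) => c.
      exfalso; have e1 := fc p ltac:(lia).
      have e2 := fc (w - m) ltac:(rewrite /m in e1 *; lia).
      have : act d (w - m) = act d (2 * f + k) by rewrite e2 -/w; rewrite /m in e1 *; lia.
      move/act_inj; rewrite /m in hk e1 *; lia.
    exists (p - 2 * f); split; first by rewrite /m; lia.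
    by rewrite subnKC ?ep //; lia.
apply: act_perm_eq => a ha; rewrite T0_act //; case: ifP => c.
  by rewrite fc; lia.
have := Q' (a - 2 * f) ltac:(rewrite /m; lia).
by rewrite subnKC //; lia.
Qed.

Lemma dJ0E n f : 2 * f <= n -> dJ n f (J0 n f) = T0 n f.
Proof.
move=> hn; rewrite /dJ; case: pickP => [d hd|none] /=.
  exact: is_dJ_J0.
by have := none (T0 n f); rewrite T0_is_dJ.
Qed.


Lemma cmp_fc n f p q : 2 * f <= n -> p <= 2 * f -> cmp n f p q ->
  odd p /\ (q = p.+1 \/ (q = p.+2 /\ p.+2 < 2 * f)).
Proof.
move=> hn hp [[r hr [e1 e2]]|[k hk [e1 e2]]|[r hr [e1 e2]]]; subst p q.
- split; [lia | left; lia].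
- lia.
- split; [lia | right; lia].
Qed.

Lemma noswap n f (d : 'S_n) j0 j1 :
  ~ (exists j, [/\ j0 <= j < j1, Dnu f (d * sadj n j)%g & len (d * sadj n j)%g = len d + 1]) ->
  1 <= j0 -> j1 <= n -> Dnu f d ->
  forall j, j0 <= j < j1 -> act (d^-1)%g j < act (d^-1)%g j.+1 ->
    cmp n f (act (d^-1)%g j) (act (d^-1)%g j.+1).
Proof.
move=> hno h0 h1 hD j hj hlt; apply: NNPP => hc; apply: hno; exists j; split => //.
  apply: Dnu_swap => //; first lia.
  move=> p q c ep eq; apply: hc.
  by rewrite -eq -ep !actK.
apply: (len_up (p := act (d^-1)%g j) (q := act (d^-1)%g j.+1)) => //; try lia.
- by have := act_in (d^-1)%g (a := j) ltac:(lia); lia.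
- by have := act_in (d^-1)%g (a := j.+1) ltac:(lia); lia.
- by rewrite actKV.
- by rewrite actKV.
Qed.

Lemma part3 n f (d : 'S_n) : 1 <= f -> 2 * f <= n -> Dnu f d ->
  d != (d0 n f * dJ n f (J0 n f))%g ->
  exists j : nat, [/\ 1 <= j <= n - 1, Dnu f (d * sadj n j)%g &
       len (d * sadj n j)%g = len d + 1].
Proof.
move=> hf hn hD hne; apply: NNPP => hno.
have hno' : ~ (exists j, [/\ 1 <= j < n, Dnu f (d * sadj n j)%g & len (d * sadj n j)%g = len d + 1]).
  move=> [j [h1 h2 h3]]; apply: hno; exists j; split => //; lia.
have NS := noswap hno' isT (leqnn n) hD.
move: (hD) => /DnuE [Hrow H2 Hcol].
pose m := n - 2 * f.
pose u := act d; pose g := act (d^-1)%g.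
have gu : forall a, g (u a) = a by move=> a; rewrite /g /u actK.
have ug : forall a, u (g a) = a by move=> a; rewrite /g /u actKV.
have Q' : forall k, 1 <= k <= m -> u (2 * f + k) = k.
  apply: (@Qlemma m (fun k => u (2 * f + k))).
  - move=> k h1 h3; have := H2 k.-1 ltac:(rewrite /m in h3; lia).
    rewrite (_ : 2 * f + k.-1 + 1 = 2 * f + k); last lia.
    by rewrite (_ : 2 * f + k.-1 + 2 = 2 * f + k.+1); last lia.
  - move=> k hk; rewrite /u; have := act_in d (a := 2 * f + k) ltac:(rewrite /m in hk; lia); lia.
  - move=> k hk hw.
    set w := u (2 * f + k) in hw *.
    have hwn : w <= n by have := act_in d (a := 2 * f + k) ltac:(rewrite /m in hk; lia); rewrite -/u -/w; lia.
    have hp : 1 <= g w.-1 <= n by apply: act_in; lia.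
    have ep : u (g w.-1) = w.-1 by rewrite ug.
    have gw : g (w.-1).+1 = 2 * f + k by rewrite prednK ?gu //; lia.
    case: (ltngtP (g w.-1) (2 * f + k)) => c.
    + have := NS w.-1 ltac:(lia); rewrite -/g gw => /(_ c) [[r hr [_ e]]|[k0 hk0 [e1 e2]]|[r hr [_ e]]].
      * lia.
      * exists k.-1; split; first by rewrite /m in hk *; lia.
        by rewrite -ep e1; congr u; lia.
      * lia.
    + exists (g w.-1 - 2 * f); split; first by rewrite /m in hk *; lia.
      by rewrite subnKC ?ep //; lia.
    + by move: ep; rewrite c -/w; lia.
have FC := @FC_all m f u g.
have H1' : forall a, 1 <= a <= 2 * f -> m < u a <= m + 2 * f.
  move=> a ha; have := act_in d (a := a) ltac:(lia); rewrite -/u => hu.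
  case: (leqP (u a) m) => c; last by rewrite /m; lia.
  have := Q' (u a) ltac:(lia) => e.
  have : u (2 * f + u a) = u a by [].
  move/act_inj; lia.
have H2' : forall v, m < v <= m + 2 * f -> 1 <= g v <= 2 * f /\ u (g v) = v.
  move=> v hv; split; last exact: ug.
  have := act_in (d^-1)%g (a := v) ltac:(rewrite /m in hv; lia); rewrite -/g => hg.
  case: (leqP (g v) (2 * f)) => c; first lia.
  have := Q' (g v - 2 * f) ltac:(rewrite /m; lia); rewrite subnKC ?ug; lia.
have := FC H1' H2' (fun a b _ _ e => act_inj e).
move=> /(_ Hrow Hcol) => FC2.
have FC3 : forall r, r < f -> u (2 * r + 1) = m + r + 1 /\ u (2 * r + 2) = m + 2 * f - r.
  apply: FC2 => j h1 h2 h3.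
  have := NS j ltac:(rewrite /m in h2; lia) h3.
  apply: cmp_fc => //.
  by have := H2' j ltac:(lia); rewrite /g; lia.
apply/negP: hne; rewrite negbK; apply/eqP/act_perm_eq => a ha.
rewrite actM dJ0E // d0_act // T0_act; last by have := d0img_rng (a := a) hn ha.
rewrite /d0img -/u.
case: (leqP a (2 * f)) => c /=.
  case: (boolP (odd a)) => o.
    have := FC3 ((a - 1)./2) ltac:(lia).
    rewrite (_ : 2 * (a - 1)./2 + 1 = a); last lia.
    move=> [-> _]; rewrite ifT; [rewrite /m; lia | lia].
  have := FC3 ((a - 2)./2) ltac:(lia).
  rewrite (_ : 2 * (a - 2)./2 + 2 = a); last lia.
  move=> [_ ->]; rewrite ifT; [rewrite /m; lia | lia].
rewrite ifF; last lia.
have := Q' (a - 2 * f) ltac:(rewrite /m; lia); rewrite subnKC //; lia.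
Qed.


Lemma len_bound n (d : 'S_n) : len d <= n * n.
Proof. by rewrite lenE inv_bound. Qed.

Lemma part1 n f (d : 'S_n) : 1 <= f -> 2 * f <= n -> Df f d -> reach d (d0 n f).
Proof.
move=> hf hn.
suff : forall N (d : 'S_n), n * n - len d < N -> Df f d -> reach d (d0 n f).
  by move=> H; apply: (H (n * n - len d).+1).
elim => [|N IH] {}d hN /andP [hD hS]; first lia.
case: (eqVneq d (d0 n f)) => [->|hne]; first exact: reach_refl.
move: (hS) => /inS2fE hfix.
have [j [hj hD' hl]] : exists j, [/\ 1 <= j < 2 * f, Dnu f (d * sadj n j)%g &
    len (d * sadj n j)%g = len d + 1].
  apply: NNPP => hno.
  have NS := noswap hno isT hn hD.
  move: (hD) => /DnuE [Hrow _ Hcol].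
  pose u := act d; pose g := act (d^-1)%g.
  have ug : forall a, u (g a) = a by move=> a; rewrite /g /u actKV.
  have H1' : forall a, 1 <= a <= 2 * f -> 0 < u a <= 0 + 2 * f.
    move=> a ha; have := act_in d (a := a) ltac:(lia); rewrite -/u => hu.
    case: (leqP (u a) (2 * f)) => c; first lia.
    have := hfix (u a) ltac:(lia) => e.
    have : u (u a) = u a by [].
    move/act_inj; lia.
  have H2' : forall v, 0 < v <= 0 + 2 * f -> 1 <= g v <= 2 * f /\ u (g v) = v.
    move=> v hv; split; last exact: ug.
    have := act_in (d^-1)%g (a := v) ltac:(lia); rewrite -/g => hg.
    case: (leqP (g v) (2 * f)) => c; first lia.
    have := hfix (g v) ltac:(lia); rewrite -/u ug; lia.
  have FC3 := FC_all H1' H2' (fun a b _ _ e => act_inj e) Hrow Hcol.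
  have FC4 : forall r, r < f -> u (2 * r + 1) = 0 + r + 1 /\ u (2 * r + 2) = 0 + 2 * f - r.
    apply: FC3 => j h1 h2 h3.
    have := NS j ltac:(lia) h3.
    apply: cmp_fc => //.
    by have := H2' j ltac:(lia); rewrite /g; lia.
  apply/negP: hne; rewrite negbK; apply/eqP/act_perm_eq => a ha.
  rewrite d0_act // /d0img -/u.
  case: (leqP a (2 * f)) => c /=; last by rewrite /u hfix //; lia.
  case: (boolP (odd a)) => o.
    have := FC4 ((a - 1)./2) ltac:(lia).
    rewrite (_ : 2 * (a - 1)./2 + 1 = a); last lia.
    move=> [-> _]; lia.
  have := FC4 ((a - 2)./2) ltac:(lia).
  rewrite (_ : 2 * (a - 2)./2 + 2 = a); last lia.
  move=> [_ ->]; lia.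
have hjn : 1 <= j < n by lia.
apply: (reach_step hjn hl); apply: IH.
  by have := len_bound (d * sadj n j)%g; rewrite hl; lia.
rewrite /Df hD' /=; apply/inS2fE => a ha.
by rewrite actM hfix // act_sadj // /sig; case: (a =P j); case: (a =P j.+1); lia.
Qed.


Lemma sig_mono j x y : x < y -> ~ (x = j /\ y = j.+1) -> sig j x < sig j y.
Proof. rewrite /sig => h1 h2; case: (x =P j); case: (x =P j.+1); case: (y =P j); case: (y =P j.+1); lia. Qed.

Lemma sigK j : involutive (sig j).
Proof. move=> x; rewrite /sig; case: (x =P j) => [->|h1]; first by rewrite eqxx ifF //; lia.
case: (x =P j.+1) => [->|h2]; first by rewrite eqxx.
by do 2 (rewrite ifF; last by apply/eqP).
Qed.

Lemma sig_inj j : injective (sig j).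
Proof. exact: inv_inj (sigK j). Qed.

Lemma memJ n f J (d : 'S_n) : inP n f J -> is_dJ f J d ->
  forall p, 1 <= p <= n -> (act d p \in J) = (p <= 2 * f).
Proof.
case/and3P => /eqP hs _ _ /is_dJE [_ hJ] p hp.
case: (leqP p (2 * f)) => c.
  case: p hp c => [|a] hp c; first lia.
  by rewrite hJ // mem_nth // hs.
apply/negbTE/negP => hin.
have hi : index (act d p) J < 2 * f by rewrite -hs index_mem.
have := hJ _ hi; rewrite nth_index // => /act_inj; lia.
Qed.

Lemma inP_swap n f J j : inP n f J -> 1 <= j < n -> j \in J -> j.+1 \notin J ->
  inP n f (map (sig j) J).
Proof.
case/and3P => hs hso hall hj hin hout; apply/and3P; split.
- by rewrite size_map.
- apply: (homo_sorted_in (P := mem J) (e := ltn)); last exact: hso; last by apply/allP.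
  move=> x y hx hy /= hxy; apply: sig_mono => // -[ex ey].
  by move: hout; rewrite -ey hy.
- rewrite all_map; apply/allP => x hx; have := allP hall x hx.
  rewrite /= /sig; case: (x =P j); case: (x =P j.+1); lia.
Qed.

Lemma cmp_side n f p q : 2 * f <= n -> cmp n f p q ->
  [/\ 1 <= p <= n, 1 <= q <= n & (p <= 2 * f) = (q <= 2 * f)].
Proof.
move=> hn [[r hr [e1 e2]]|[k hk [e1 e2]]|[r hr [e1 e2]]]; subst p q; split; try lia;
  apply/idP/idP; lia.
Qed.

Lemma is_dJ_swap n f J (d : 'S_n) j : 2 * f <= n -> inP n f J -> is_dJ f J d -> 1 <= j < n ->
  (j \in J) != (j.+1 \in J) -> is_dJ f (map (sig j) J) (d * sadj n j)%g.
Proof.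
move=> hn hP hd hj hne; have mJ := memJ hP hd.
move: (hP) => /and3P [/eqP hs _ _].
move: hd => /is_dJE [hD hJ]; apply/is_dJE; split.
  apply: Dnu_swap => // p q c ep eq.
  have [hp hq e] := cmp_side hn c.
  move: hne; rewrite -eq -ep !mJ // e; by rewrite eqxx.
move=> a ha; rewrite actM hJ // act_sadj //.
by rewrite (nth_map 0) // hs.
Qed.

Lemma J_step n f J : 1 <= f -> 2 * f <= n -> inP n f J -> J != J0 n f ->
  exists j, [/\ 1 <= j < n, j \in J & j.+1 \notin J].
Proof.
move=> hf hn hP hne; apply: NNPP => hno.
have H : forall j, 1 <= j < n -> j \in J -> j.+1 \in J.
  move=> j hj hin; apply: NNPP => hout; apply: hno; exists j; split => //.
  by apply/negP.
move/negP: hne; apply; apply/eqP.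
move: hP => /and3P [/eqP hs hso hall].
pose x i := nth 0 J i.
have mono : forall i i', i < i' -> i' < 2 * f -> x i < x i'.
  move=> i i' h1 h2; apply: (sorted_ltn_nth ltn_trans 0 hso) => //; rewrite inE hs; lia.
have mono_le : forall i i', i <= i' -> i' < 2 * f -> x i <= x i'.
  move=> i i' h1 h2; case: (ltngtP i i') => c; [exact: ltnW (mono _ _ c h2) | lia | by rewrite c].
have rng : forall i, i < 2 * f -> 1 <= x i <= n.
  move=> i hi; have hi' : i < size J by rewrite hs.
  by have := allP hall (x i) (mem_nth 0 hi').
have memx : forall y, y \in J -> exists2 i, i < 2 * f & x i = y.
  move=> y hy; exists (index y J); first by rewrite -hs index_mem.
  exact: nth_index.
have inx : forall i, i < 2 * f -> x i \in J by move=> i hi; apply: mem_nth; rewrite hs.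
have last : x (2 * f).-1 = n.
  apply: NNPP => ne.
  have r1 := rng (2 * f).-1 ltac:(lia).
  have [i hi e] := memx _ (H (x (2 * f).-1) ltac:(lia) (inx (2 * f).-1 ltac:(lia))).
  case: (ltngtP i (2 * f).-1) => c.
  - by have := mono _ _ c ltac:(lia); lia.
  - lia.
  - by move: e; rewrite c; lia.
have step : forall i, i.+1 < 2 * f -> x i.+1 = (x i).+1.
  move=> i hi; have m1 := mono i i.+1 (ltnSn i) hi.
  have r1 := rng i.+1 hi.
  have [i' hi' e] := memx _ (H (x i) ltac:(have := rng i ltac:(lia); lia) (inx i ltac:(lia))).
  case: (leqP i' i) => c.
    by have := mono_le _ _ c ltac:(lia); lia.
  by have := mono_le _ _ c hi'; lia.
have down : forall k, k < 2 * f -> x ((2 * f).-1 - k) = n - k.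
  elim => [|k IH] hk; first by rewrite subn0 last subn0.
  have := step ((2 * f).-1 - k.+1) ltac:(lia).
  rewrite (_ : ((2 * f).-1 - k.+1).+1 = (2 * f).-1 - k); last lia.
  rewrite IH; last lia.
  lia.
apply: (eq_from_nth (x0 := 0)); first by rewrite hs /J0 size_iota.
move=> i; rewrite hs => hi; rewrite J0_nth //.
have := down ((2 * f).-1 - i) ltac:(lia).
rewrite (_ : (2 * f).-1 - ((2 * f).-1 - i) = i); last lia.
rewrite /x => ->; lia.
Qed.


Definition mu n f (J : seq nat) := \sum_(i < 2 * f) (n - nth 0 J i).

Lemma mu_swap n f J j : inP n f J -> 1 <= j < n -> j \in J -> j.+1 \notin J ->
  mu n f (map (sig j) J) < mu n f J.
Proof.
move=> /and3P [/eqP hs _ _] hj hin hout.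
have hi0 : index j J < 2 * f by rewrite -hs index_mem.
pose i0 := Ordinal hi0.
rewrite /mu (bigD1 i0) //= [X in _ < X](bigD1 i0) //=.
rewrite (nth_map 0); last by rewrite hs.
rewrite nth_index // /sig eqxx.
rewrite -addSn; apply: leq_add; first lia.
apply: leq_sum => i _.
rewrite (nth_map 0); last by rewrite hs.
have : nth 0 J i != j.+1.
  by apply/eqP => e; move: hout; rewrite -e mem_nth // hs.
rewrite /sig; case: (nth 0 J i =P j); case: (nth 0 J i =P j.+1); lia.
Qed.

Lemma dJ_exists n f J : 1 <= f -> 2 * f <= n -> inP n f J -> exists d : 'S_n, is_dJ f J d.
Proof.
move=> hf hn.
suff : forall N J, mu n f J < N -> inP n f J -> exists d : 'S_n, is_dJ f J d.
  by move=> H; apply: (H (mu n f J).+1).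
elim => [|N IH] {}J hN hP; first lia.
case: (eqVneq J (J0 n f)) => [->|hne]; first by exists (T0 n f); apply: T0_is_dJ.
have [j [hj hin hout]] := J_step hf hn hP hne.
have hP' := inP_swap hP hj hin hout.
have [d' hd'] := IH (map (sig j) J) ltac:(have := mu_swap hP hj hin hout; lia) hP'.
exists (d' * sadj n j)%g.
rewrite -[J in is_dJ _ J](mapK (sigK j)).
apply: is_dJ_swap => //.
have e1 : (j \in map (sig j) J) = false.
  rewrite -{1}(sigK j j) mem_map; last exact: sig_inj.
  by rewrite /sig eqxx (negbTE hout).
have e2 : (j.+1 \in map (sig j) J).
  have -> : j.+1 = sig j j by rewrite /sig eqxx.
  by rewrite mem_map //; exact: sig_inj.
by rewrite e1 e2.
Qed.

Lemma chain n f J (d : 'S_n) : 1 <= f -> 2 * f <= n -> inP n f J -> is_dJ f J d ->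
  reach d (dJ n f (J0 n f)).
Proof.
move=> hf hn.
suff : forall N J (d : 'S_n), n * n - len d < N -> inP n f J -> is_dJ f J d ->
  reach d (dJ n f (J0 n f)).
  by move=> H; apply: (H (n * n - len d).+1).
elim => [|N IH] {}J {}d hN hP hd; first lia.
case: (eqVneq J (J0 n f)) => [e|hne].
  have hd0 : is_dJ f (J0 n f) d by rewrite -e.
  by rewrite dJ0E // -(is_dJ_J0 hn hd0); apply: reach_refl.
have [j [hj hin hout]] := J_step hf hn hP hne.
have mJ := memJ hP hd.
have hP' := inP_swap hP hj hin hout.
have hd' := is_dJ_swap hn hP hd hj ltac:(by rewrite hin (negbTE hout)).
pose p := act (d^-1)%g j; pose q := act (d^-1)%g j.+1.
have hp : 1 <= p <= n by apply: act_in; lia.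
have hq : 1 <= q <= n by apply: act_in; lia.
have ep : act d p = j by rewrite actKV.
have eq : act d q = j.+1 by rewrite actKV.
have p2 : p <= 2 * f by rewrite -mJ // ep.
have q2 : ~~ (q <= 2 * f) by rewrite -mJ // eq.
have hl := len_up (p := p) (q := q) hj ltac:(lia) ltac:(lia) ltac:(lia) ep eq.
apply: (reach_step hj hl); apply: (IH _ _ _ hP' hd').
by have := len_bound (d * sadj n j)%g; rewrite hl; lia.
Qed.

Lemma part2 n f J : 1 <= f -> 2 * f <= n -> inP n f J ->
  exists w' : 'S_n, dJ n f (J0 n f) = (dJ n f J * w')%g /\
       len (dJ n f (J0 n f)) = len (dJ n f J) + len w'.
Proof.
move=> hf hn hP.
have hd : is_dJ f J (dJ n f J).
  rewrite /dJ; case: pickP => [d hd //|none].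
  by have [d hd] := dJ_exists hf hn hP; move: (none d); rewrite hd.
exact: (chain hf hn hP hd).
Qed.


Theorem lemma5p11 (n f : nat) (hf1 : 1 <= f) (hf2 : f <= n./2) :
  (forall d : 'S_n, Df f d ->
     exists w : 'S_n, d0 n f = (d * w)%g /\ len (d0 n f) = len d + len w) /\
  (forall J : seq nat, inP n f J ->
     exists w' : 'S_n, dJ n f (J0 n f) = (dJ n f J * w')%g /\
       len (dJ n f (J0 n f)) = len (dJ n f J) + len w') /\
  (forall d : 'S_n, Dnu f d -> d != (d0 n f * dJ n f (J0 n f))%g ->
     exists j : nat, [/\ 1 <= j <= n - 1, Dnu f (d * sadj n j)%g &
       len (d * sadj n j)%g = len d + 1]).
Proof.
have hn : 2 * f <= n by lia.
split; [|split].
- move=> d hd; exact: (part1 hf1 hn hd).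
- move=> J hJ; exact: (part2 hf1 hn hJ).
- move=> d hd hne; exact: (part3 hf1 hn hd hne).
Qed.
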